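(* Let $y_1=x_2x_1x_2^{-1}$. For every integer $n\ge1$, $x_1^n$ has one of the forms $M_0([23,224,138],[59,136,495],\dots)$, $M_0([23,224,138],[28,88,341],\dots)$, $M_{2^r-1}([39,208,186],[0,0,0],\dots)$ for some odd $r\ge1$, or $M_{2^r-1}([23,224,138],[0,0,0],\dots)$ for some even $r\ge2$; and for every $n\ge1$, $y_1^n$ has one of the forms $M_0([23,224,138],[33,146,501],\dots)$, $M_0([23,224,138],[6,66,335],\dots)$, $M_{2^r-1}([39,208,186],[0,106,247],\dots)$ for some odd $r\ge1$, or $M_{2^r-1}([23,224,138],[26,26,26],\dots)$ for some even $r\ge2$.
   Context: Consider infinite upper unitriangular block matrices $X=(X_{r,s})_{r,s\ge1}$ whose entries are $3\times3$ matrices over $\mathbb F_2$, with $X_{r,r}=I$, $X_{r,s}=0$ for $s<r$, and whose upper diagonals are $3$-periodic: for each $j\ge1$ there are $a_{j1},a_{j2},a_{j3}\in M(3,\mathbb F_2)$ with $X_{r,r+j}=a_{j,i}$, where $i\in\{1,2,3\}$, $i\equiv r\pmod 3$; $a_j=[a_{j1},a_{j2},a_{j3}]$ is the $j$-th upper diagonal. For $l\ge0$, $M_l(c_1,c_2,\dots)$ denotes such a matrix whose first $l$ upper diagonals are zero and whose $(l+1)$-st, $(l+2)$-nd, $\dots$ upper diagonals are $c_1,c_2,\dots$; diagonals hidden in ''$\dots$'' are unspecified, while a matrix written $M_0(c_1,\dots,c_m)$ without dots has all further diagonals zero. A matrix $u=(u_{pq})\in M(3,\mathbb F_2)$ is encoded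 by the integer $256u_{11}+128u_{12}+64u_{13}+32u_{21}+16u_{22}+8u_{23}+4u_{31}+2u_{32}+u_{33}$, and a diagonal by the triple of integers of its three blocks. The elements are $x_1=M_0([23,224,138],[59,136,495],[26,488,227],[23,224,0],[59,0,0])$, $x_2=M_0([46,68,217],[12,194,363],[26,326,77],[46,68,0],[12,0,0])$. *)

(* Defs.v *)
From HB Require Import structures.
From mathcomp Require Import all_boot all_order all_algebra.
Set Implicit Arguments. Unset Strict Implicit. Unset Printing Implicit Defensive.
Import GRing.Theory.
Local Open Scope ring_scope.

Notation blk := 'M['F_2]_3.

(* An infinite block matrix X = (X_{r,s})_{r,s >= 1}; only indices r,s >= 1
   are meaningful (index 0 is ignored everywhere). *)
Definition bmat := nat -> nat -> blk.

(* Product of (upper triangular) infinite block matrices: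
   (XY)_{r,s} = sum_{r <= t <= s} X_{r,t} Y_{t,s}. *)
Definition bmul (X Y : bmat) : bmat :=
  fun r s => \sum_(r <= t < s.+1) X r t *m Y t s.

Definition bone : bmat := fun r s => if r == s then 1%:M else 0.

Definition bpow (X : bmat) (n : nat) : bmat := iter n (bmul X) bone.

(* Inverse of a unitriangular X = I + N (N strictly upper triangular):
   X^{-1} = sum_k (-N)^k, a finite sum entrywise since (N^k)_{r,s} = 0 for k > s - r. *)
Definition bneg_strict (X : bmat) : bmat := fun r s => bone r s - X r s.
Definition binv (X : bmat) : bmat :=
  fun r s => \sum_(k < (s - r).+1) bpow (bneg_strict X) k r s.

(* Integer encoding: u = sum 2^(8 - (3p+q)) u_{pq} (0-based p,q). *)
Definition decode (c : nat) : blk :=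
  \matrix_(p < 3, q < 3) ((odd (c %/ 2 ^ (8 - (3 * p + q)))%N)%:R : 'F_2).

Definition diag3 := (nat * nat * nat)%type.

(* block of a diagonal at row r (r >= 1): a_{j,i} with i = r mod 3 in {1,2,3} *)
Definition sel (d : diag3) (r : nat) : nat :=
  let: (a, b, c) := d in
  if (r %% 3 == 1)%N then a else if (r %% 3 == 2)%N then b else c.

Definition in_class (X : bmat) : Prop :=
  (forall r, (1 <= r)%N -> X r r = 1%:M) /\
  (forall r s, (1 <= s)%N -> (s < r)%N -> X r s = 0) /\
  (forall r j, (1 <= r)%N -> (1 <= j)%N -> X (r + 3)%N (r + 3 + j)%N = X r (r + j)%N).

(* X has the form M_l(c1, c2, ...) : first l upper diagonals zero,
   (l+1)-st diagonal c1, (l+2)-nd diagonal c2, further diagonals unspecified. *)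
Definition has_form (X : bmat) (l : nat) (c1 c2 : diag3) : Prop :=
  in_class X /\
  (forall r j, (1 <= r)%N -> (1 <= j <= l)%N -> X r (r + j)%N = 0) /\
  (forall r, (1 <= r)%N -> X r (r + l.+1)%N = decode (sel c1 r)) /\
  (forall r, (1 <= r)%N -> X r (r + l.+2)%N = decode (sel c2 r)).

(* M_0(d_1, ..., d_m) with all further diagonals zero. *)
Definition mk_mat (ds : seq diag3) : bmat :=
  fun r s => if (s < r)%N then 0 else if s == r then 1%:M
             else decode (sel (nth (0, 0, 0)%N ds (s - r).-1) r).

Definition x1 : bmat :=
  mk_mat [:: (23, 224, 138); (59, 136, 495); (26, 488, 227); (23, 224, 0); (59, 0, 0)]%N.
Definition x2 : bmat :=
  mk_mat [:: (46, 68, 217); (12, 194, 363); (26, 326, 77); (46, 68, 0); (12, 0, 0)]%N.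

Definition y1 : bmat := bmul (bmul x2 x1) (binv x2).

(* Main.v *)
Require Import Defs.
From mathcomp Require Import all_boot all_order all_algebra.
From mathcomp Require Import zify.
From Stdlib Require Import FunctionalExtensionality.
Set Implicit Arguments. Unset Strict Implicit. Unset Printing Implicit Defensive.
Import GRing.Theory.
Local Open Scope ring_scope.

Definition badd (X Y : bmat) : bmat := fun r s => X r s + Y r s.
Definition bz : bmat := fun _ _ => 0.
Definition upper (X : bmat) := forall r s, (s < r)%N -> X r s = 0.
Definition small k (X : bmat) := forall r s, (s < r + k)%N -> X r s = 0.
Definition per (X : bmat) := forall r s, X (r+3)%N (s+3)%N = X r s.
Definition agree k (X Y : bmat) := forall r s, (s < r + k)%N -> X r s = Y r s.

Lemma beq (X Y : bmat) : (forall r s, X r s = Y r s) -> X = Y.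
Proof. move=> h; apply: functional_extensionality => r; apply: functional_extensionality => s; exact: h. Qed.

Lemma F2_2 (x : 'F_2) : x + x = 0.
Proof.
have h : (1 + 1 : 'F_2) = 0 by apply/eqP; vm_compute.
by rewrite -{1 2}(mulr1 x) -mulrDr h mulr0.
Qed.

Lemma blk2 (A : blk) : A + A = 0.
Proof. by apply/matrixP => i j; rewrite !mxE F2_2. Qed.

Lemma blkN (A : blk) : - A = A.
Proof. by apply/eqP; rewrite eq_sym -addr_eq0 blk2. Qed.

Lemma bmul_upper X Y : upper (bmul X Y).
Proof. by move=> r s hs; rewrite /bmul big_geq. Qed.

Lemma bone_upper : upper bone.
Proof. by move=> r s hs; rewrite /bone; case: eqP => // e; move: hs; rewrite e ltnn. Qed.

Lemma badd_upper X Y : upper X -> upper Y -> upper (badd X Y).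
Proof. by move=> hX hY r s hs; rewrite /badd hX ?hY ?addr0. Qed.

Lemma bpow_upper X n : upper (bpow X n).
Proof. case: n => [|n]; [exact: bone_upper | exact: bmul_upper]. Qed.

Lemma bmul1 X : upper X -> bmul bone X = X.
Proof.
move=> hX; apply: beq => r s; rewrite /bmul.
case: (ltnP s r) => h; first by rewrite big_geq // hX.
rewrite big_ltn ?ltnS // /bone eqxx mul1mx big1_seq ?addr0 // => t /andP[_].
rewrite mem_index_iota => /andP[ht _]; case: eqP => [e|_]; last by rewrite mul0mx.
by move: ht; rewrite e ltnn.
Qed.

Lemma bmulx1 X : upper X -> bmul X bone = X.
Proof.
move=> hX; apply: beq => r s; rewrite /bmul.
case: (ltnP s r) => h; first by rewrite big_geq // hX.
rewrite big_nat_recr //= /bone eqxx mulmx1 big1_seq ?add0r // => t /andP[_].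
rewrite mem_index_iota => /andP[_ ht]; case: eqP => [e|_]; last by rewrite mulmx0.
by move: ht; rewrite e ltnn.
Qed.

Lemma bmulDl X Y Z : bmul (badd X Y) Z = badd (bmul X Z) (bmul Y Z).
Proof. apply: beq => r s; rewrite /bmul /badd -big_split; apply: eq_bigr => t _; exact: mulmxDl. Qed.

Lemma bmulDr X Y Z : bmul X (badd Y Z) = badd (bmul X Y) (bmul X Z).
Proof. apply: beq => r s; rewrite /bmul /badd -big_split; apply: eq_bigr => t _; exact: mulmxDr. Qed.

Lemma sum_lo (F : nat -> blk) r u n : (r <= u <= n)%N ->
  \sum_(u <= t < n) F t = \sum_(r <= t < n) (if (u <= t)%N then F t else 0).
Proof.
move=> /andP[h1 h2]; rewrite (big_cat_nat h1 h2) /= [X in _ = X + _]big1_seq ?add0r.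
  by apply: eq_big_nat => t /andP[-> _].
move=> t /andP[_]; rewrite mem_index_iota => /andP[_ ht].
by rewrite leqNgt ht.
Qed.

Lemma sum_hi (F : nat -> blk) r t n : (r <= t.+1)%N -> (t <= n)%N ->
  \sum_(r <= u < t.+1) F u = \sum_(r <= u < n.+1) (if (u <= t)%N then F u else 0).
Proof.
move=> h1 h2; rewrite (big_cat_nat h1 (_ : t.+1 <= n.+1)%N) //=.
rewrite [X in _ = _ + X]big1_seq ?addr0.
  by apply: eq_big_nat => u /andP[_]; rewrite ltnS => ->.
move=> u /andP[_]; rewrite mem_index_iota => /andP[hu _].
by rewrite leqNgt hu.
Qed.

Lemma bmulA X Y Z : bmul X (bmul Y Z) = bmul (bmul X Y) Z.
Proof.
apply: beq => r s; rewrite /bmul.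
transitivity (\sum_(r <= u < s.+1) \sum_(r <= t < s.+1)
   (if (u <= t)%N then X r u *m (Y u t *m Z t s) else 0)).
  apply: eq_big_nat => u hu; rewrite mulmx_sumr (@sum_lo _ r u) //.
  by move: hu => /andP[-> ] /ltnW.
rewrite exchange_big /=.
apply: eq_big_nat => t ht; rewrite mulmx_suml (@sum_hi _ r t s).
- by apply: eq_bigr => u _; case: ifP => _; rewrite ?mulmxA ?mul0mx.
- by move: ht => /andP[h _]; apply: leqW.
- by move: ht => /andP[_]; rewrite ltnS.
Qed.

Lemma bpowD X m n : bpow X (m + n) = bmul (bpow X m) (bpow X n).
Proof.
elim: m => [|m IH]; first by rewrite add0n /= bmul1 //; exact: bpow_upper.
by rewrite addSn /= IH bmulA.
Qed.

Lemma bpowM X m n : bpow X (m * n) = bpow (bpow X m) n.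
Proof. elim: n => [|n IH]; first by rewrite muln0. by rewrite mulnS bpowD IH. Qed.

Lemma bpow1 X : upper X -> bpow X 1 = X.
Proof. by move=> h; rewrite /= bmulx1. Qed.

Lemma bpow2 X : upper X -> bpow X 2 = bmul X X.
Proof. by move=> h; rewrite /= bmulx1. Qed.


Lemma small_mul a b X Y : small a X -> small b Y -> small (a+b) (bmul X Y).
Proof.
move=> hX hY r s hs; rewrite /bmul big1_seq // => t /andP[_].
rewrite mem_index_iota => /andP[h1 h2].
case: (ltnP t (r+a)) => h; first by rewrite hX // mul0mx.
rewrite hY ?mulmx0 //; lia.
Qed.

Lemma small_le a b X : (a <= b)%N -> small b X -> small a X.
Proof. move=> hab h r s hs; apply: h; lia. Qed.

Lemma bone_small0 : small 0 bone.
Proof. by move=> r s; rewrite addn0 => hs; apply: bone_upper. Qed.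

Lemma small_bz k : small k bz.
Proof. by []. Qed.

Lemma agree_sym k X Y : agree k X Y -> agree k Y X.
Proof. by move=> h r s hs; rewrite h. Qed.

Lemma agree_trans k X Y Z : agree k X Y -> agree k Y Z -> agree k X Z.
Proof. by move=> h1 h2 r s hs; rewrite h1 ?h2. Qed.

Lemma agree_le a b X Y : (a <= b)%N -> agree b X Y -> agree a X Y.
Proof. move=> hab h r s hs; apply: h; lia. Qed.

Lemma agree_mul_r a b X Y Y' : small a X -> agree b Y Y' -> agree (a+b) (bmul X Y) (bmul X Y').
Proof.
move=> hX h r s hs; rewrite /bmul; apply: eq_big_nat => t /andP[h1 h2].
case: (ltnP t (r+a)) => ht; first by rewrite hX // !mul0mx.
rewrite h //; lia.
Qed.

Lemma agree_mul_l a b X X' Y : agree a X X' -> small b Y -> agree (a+b) (bmul X Y) (bmul X' Y).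
Proof.
move=> h hY r s hs; rewrite /bmul; apply: eq_big_nat => t /andP[h1 h2].
case: (ltnP s (t+b)) => ht; first by rewrite hY // !mulmx0.
rewrite h //; lia.
Qed.

Lemma agree_mul_r0 k X Y Y' : agree k Y Y' -> agree k (bmul X Y) (bmul X Y').
Proof.
move=> h r s hs; rewrite /bmul; apply: eq_big_nat => t /andP[h1 h2].
rewrite h //; lia.
Qed.

Lemma agree_small k X : small k X -> agree k X bz.
Proof. by move=> h r s hs; rewrite h. Qed.

Lemma agree_add k X X' Y Y' : agree k X X' -> agree k Y Y' -> agree k (badd X Y) (badd X' Y').
Proof. by move=> h1 h2 r s hs; rewrite /badd h1 ?h2. Qed.

Lemma agree_refl k X : agree k X X.
Proof. by []. Qed.

Lemma bmul_bz X : bmul X bz = bz.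
Proof. apply: beq => r s; rewrite /bmul big1 // => t _; exact: mulmx0. Qed.

Lemma badd_bz X : badd X bz = X.
Proof. by apply: beq => r s; rewrite /badd addr0. Qed.

Lemma sq_char2 K : upper K -> bmul (badd bone K) (badd bone K) = badd bone (bmul K K).
Proof.
move=> hK; have hbK : upper (badd bone K) by apply: badd_upper => //; exact: bone_upper.
rewrite bmulDl bmul1 // bmulDr bmulx1 //.
by apply: beq => r s; rewrite /badd !addrA -(addrA (bone r s)) blk2 addr0.
Qed.

Lemma pow2_char2 K j : upper K -> bpow (badd bone K) (2 ^ j) = badd bone (bpow K (2 ^ j)).
Proof.
move=> hK; elim: j => [|j IH].
  have hb : upper (badd bone K) by apply: badd_upper => //; exact: bone_upper.
  by rewrite expn0 !bpow1.
have h1 := bpow_upper K (2 ^ j).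
have h2 : upper (badd bone (bpow K (2 ^ j))) by apply: badd_upper => //; exact: bone_upper.
by rewrite expnSr !bpowM IH !bpow2 // sq_char2.
Qed.

Lemma pow_odd K l m : upper K -> small l K ->
  agree (l + l) (bpow (badd bone K) m) (badd bone (if odd m then K else bz)).
Proof.
move=> hK hs; elim: m => [|m IH].
  by move=> r s _; rewrite /= /badd addr0.
rewrite [bpow _ _]/=.
have hC : upper (if odd m then K else bz) by case: (odd m).
apply: agree_trans (agree_mul_r0 _ IH) _.
rewrite bmulDl bmul1; last by apply: badd_upper => //; exact: bone_upper.
rewrite bmulDr bmulx1 //.
have hKC : small (l + l) (bmul K (if odd m then K else bz)).
  by case: (odd m); [exact: small_mul | rewrite bmul_bz].
move=> r s hrs; rewrite /badd (hKC r s hrs) addr0 /=.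
by case: (odd m) => /=; rewrite -addrA ?blk2 ?addr0 ?add0r.
Qed.


Lemma sel_red d p : sel d p = sel d (p %% 3)%N.
Proof. by case: d => [[a b] c]; rewrite /sel modn_mod. Qed.

Lemma sel_redD d p k : sel d (p + k) = sel d (p %% 3 + k)%N.
Proof. by rewrite sel_red [in RHS]sel_red modnDml. Qed.

Ltac selcase p := rewrite ?(sel_red _ p) ?(sel_redD _ p);
  move: (@ltn_pmod p 3 isT);
  case: (p %% 3)%N => [|[|[|//]]] _ /=.

Definition o0 : 'I_3 := Ordinal (isT : (0 < 3)%N).
Definition o1 : 'I_3 := Ordinal (isT : (1 < 3)%N).
Definition o2 : 'I_3 := Ordinal (isT : (2 < 3)%N).
Lemma ordcase (i : 'I_3) : i = o0 \/ i = o1 \/ i = o2.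
Proof.
case: i => [[|[|[|//]]]] h; [left|right;left|right;right]; exact: val_inj.
Qed.
Lemma forall33 (f g : 'I_3 -> 'I_3 -> 'F_2) :
  [&& f o0 o0 == g o0 o0, f o0 o1 == g o0 o1, f o0 o2 == g o0 o2,
      f o1 o0 == g o1 o0, f o1 o1 == g o1 o1, f o1 o2 == g o1 o2,
      f o2 o0 == g o2 o0, f o2 o1 == g o2 o1 & f o2 o2 == g o2 o2] ->
  forall i j, f i j = g i j.
Proof.
move=> /and5P[h1 h2 h3 h4 /and5P[h5 h6 h7 h8 h9]] i j; apply/eqP.
by case: (ordcase i) => [->|[->|->]]; case: (ordcase j) => [->|[->|->]].
Qed.

Lemma mulE3 (A B : blk) i j : (A *m B) i j =
  A i (Ordinal (isT : (0 < 3)%N)) * B (Ordinal (isT : (0 < 3)%N)) j +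
  A i (Ordinal (isT : (1 < 3)%N)) * B (Ordinal (isT : (1 < 3)%N)) j +
  A i (Ordinal (isT : (2 < 3)%N)) * B (Ordinal (isT : (2 < 3)%N)) j.
Proof.
rewrite mxE !big_ord_recr big_ord0 /= add0r.
by congr (A i _ * B _ j + A i _ * B _ j + A i _ * B _ j); apply: val_inj.
Qed.


Lemma addE3 (A B : blk) i j : (A + B) i j = A i j + B i j.
Proof. by rewrite mxE. Qed.

Ltac mxc := apply/matrixP; let i := fresh in let j := fresh in intros i j;
  repeat (rewrite addE3 || rewrite mulE3); rewrite ?mxE; revert i j; refine (@forall33 _ _ _); vm_compute; reflexivity.

Lemma C3a p : decode (sel (39,208,186)%N p) *m decode (sel (39,208,186)%N (p+2)) = decode (sel (23,224,138)%N p).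
Proof. selcase p; mxc. Qed.
Lemma C3b p : decode (sel (23,224,138)%N p) *m decode (sel (23,224,138)%N (p+1)) = decode (sel (39,208,186)%N p).
Proof. selcase p; mxc. Qed.
Lemma C4 p : decode (sel (59,136,495)%N p) + decode (sel (39,208,186)%N p) = decode (sel (28,88,341)%N p).
Proof. selcase p; mxc. Qed.
Lemma C5a p : decode (sel (59,136,495)%N p) + decode (sel (46,68,217)%N p) *m decode (sel (23,224,138)%N (p+1))
  + decode (sel (23,224,138)%N p) *m decode (sel (46,68,217)%N (p+1)) = decode (sel (33,146,501)%N p).
Proof. selcase p; mxc. Qed.
Lemma C5b p : decode (sel (28,88,341)%N p) + decode (sel (46,68,217)%N p) *m decode (sel (23,224,138)%N (p+1))
  + decode (sel (23,224,138)%N p) *m decode (sel (46,68,217)%N (p+1)) = decode (sel (6,66,335)%N p).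
Proof. selcase p; mxc. Qed.
Lemma C6a p : decode (sel (0,0,0)%N p) + decode (sel (46,68,217)%N p) *m decode (sel (39,208,186)%N (p+1))
  + decode (sel (39,208,186)%N p) *m decode (sel (46,68,217)%N (p+2)) = decode (sel (0,106,247)%N p).
Proof. selcase p; mxc. Qed.
Lemma C6b p : decode (sel (0,0,0)%N p) + decode (sel (46,68,217)%N p) *m decode (sel (23,224,138)%N (p+1))
  + decode (sel (23,224,138)%N p) *m decode (sel (46,68,217)%N (p+1)) = decode (sel (26,26,26)%N p).
Proof. selcase p; mxc. Qed.


Lemma bmul_per X Y : per X -> per Y -> per (bmul X Y).
Proof.
move=> hX hY r s; rewrite /bmul.
have -> : ((s + 3).+1 = s.+1 + 3)%N by lia.
rewrite big_addn addnK; apply: eq_bigr => t _; by rewrite hX hY.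
Qed.

Lemma bone_per : per bone.
Proof. by move=> r s; rewrite /bone eqn_add2r. Qed.

Lemma badd_per X Y : per X -> per Y -> per (badd X Y).
Proof. by move=> hX hY r s; rewrite /badd hX hY. Qed.

Lemma bpow_per X n : per X -> per (bpow X n).
Proof. move=> h; elim: n => [|n IH]; [exact: bone_per | exact: bmul_per]. Qed.

Lemma sel_add3 d r : sel d (r + 3) = sel d r.
Proof. by rewrite (sel_red _ (r+3)) modnDr -sel_red. Qed.

Lemma mk_mat_per ds : per (mk_mat ds).
Proof.
move=> r s; rewrite /mk_mat ltn_add2r eqn_add2r subnDr sel_add3 //.
Qed.

Lemma mk_mat_upper ds : upper (mk_mat ds).
Proof. by move=> r s h; rewrite /mk_mat h. Qed.

Lemma mk_mat_diag ds r : mk_mat ds r r = 1%:M.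
Proof. by rewrite /mk_mat ltnn eqxx. Qed.

Lemma mk_mat_val ds p j : (0 < j)%N ->
  mk_mat ds p (p + j) = decode (sel (nth (0,0,0)%N ds j.-1) p).
Proof.
move=> hj; rewrite /mk_mat ifF; last by apply/negbTE; rewrite -leqNgt leq_addr.
by rewrite ifF ?addKn //; apply/negbTE; rewrite -[p in _ != p]addn0 eqn_add2l -lt0n.
Qed.

Lemma bmul_diag X Y r : bmul X Y r r = X r r *m Y r r.
Proof. by rewrite /bmul big_nat1. Qed.

Lemma per_iter X r s k : per X -> X (r + 3 * k)%N (s + 3 * k)%N = X r s.
Proof.
move=> h; elim: k => [|k IH]; first by rewrite muln0 !addn0.
by rewrite mulnS (addnC 3 (3 * k)) (addnA r) (addnA s) h IH.
Qed.

Lemma per_red X p j : per X -> X p (p + j)%N = X (p %% 3)%N (p %% 3 + j)%N.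
Proof.
move=> h; rewrite -(per_iter (p %% 3) (p %% 3 + j) (p %/ 3) h).
have e : (p %% 3 + 3 * (p %/ 3) = p)%N by rewrite addnC mulnC -divn_eq.
by rewrite addnAC e.
Qed.

Lemma decode0 : decode 0 = 0.
Proof. by apply/matrixP => i j; rewrite !mxE div0n. Qed.

Lemma in_class_of X : upper X -> per X -> (forall r, X r r = 1%:M) -> in_class X.
Proof.
move=> hu hp hd; split; first by move=> r _; exact: hd.
split; first by move=> r s _ h; exact: hu.
by move=> r j _ _; rewrite -addnA (addnC 3) addnA hp.
Qed.

Lemma bpow_diag X n r : X r r = 1%:M -> bpow X n r r = 1%:M.
Proof. move=> h; elim: n => [|n IH]; first by rewrite /= /bone eqxx. by rewrite /= bmul_diag h IH mul1mx. Qed.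

Definition strict (X : bmat) : bmat := fun r s => if (s <= r)%N then 0 else X r s.

Lemma strict_split X : upper X -> (forall r, X r r = 1%:M) -> X = badd bone (strict X).
Proof.
move=> hu hd; apply: beq => r s; rewrite /badd /strict /bone.
case: (ltngtP s r) => h.
- by rewrite hu // addr0.
- by rewrite add0r.
- by rewrite h hd addr0.
Qed.

Lemma strict_upper X : upper (strict X).
Proof. by move=> r s h; rewrite /strict ltnW. Qed.

Lemma strict_small X : small 1 (strict X).
Proof. by move=> r s; rewrite addn1 ltnS /strict => ->. Qed.

Lemma strict_per X : per X -> per (strict X).
Proof. by move=> h r s; rewrite /strict leq_add2r h. Qed.

Lemma strict_val X p j : (0 < j)%N -> strict X p (p + j)%N = X p (p + j)%N.
Proof. by move=> hj; rewrite /strict leqNgt -{1}[p]addn0 ltn_add2l hj. Qed.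

Definition bhom d (X : bmat) := forall r s, s != (r + d)%N -> X r s = 0.

Lemma hom_small d X : bhom d X -> small d X.
Proof. by move=> h r s hs; apply: h; rewrite neq_ltn hs. Qed.

Lemma hom_mul a b X Y : bhom a X -> bhom b Y -> bhom (a + b) (bmul X Y).
Proof.
move=> hX hY r s hs; rewrite /bmul big1 // => t _.
case: (eqVneq t (r + a)%N) => [e|ne]; last by rewrite hX // mul0mx.
by rewrite hY ?mulmx0 // e -addnA.
Qed.

Lemma sum_single (F : nat -> blk) m n k : (m <= k < n)%N ->
  (forall t, t != k -> F t = 0) -> \sum_(m <= t < n) F t = F k.
Proof.
move=> hk h; rewrite (bigD1_seq k) ?mem_index_iota ?iota_uniq //=.
by rewrite big1 ?addr0 // => t /h.
Qed.

Lemma hom_mul_val a b X Y r : bhom a X -> bhom b Y ->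
  bmul X Y r (r + a + b)%N = X r (r + a)%N *m Y (r + a)%N (r + a + b)%N.
Proof.
move=> hX hY; rewrite /bmul (@sum_single _ _ _ (r + a)%N); first by [].
  lia.
by move=> t ht; rewrite hX ?mul0mx.
Qed.

Lemma bone_hom : bhom 0 bone.
Proof. by move=> r s; rewrite addn0 /bone eq_sym => /negbTE ->. Qed.

Lemma bpow_hom d X k : bhom d X -> bhom (d * k) (bpow X k).
Proof.
move=> h; elim: k => [|k IH]; first by rewrite muln0; exact: bone_hom.
by rewrite mulnS; apply: hom_mul.
Qed.

Lemma mul_s1_l A B a p : small 1 A -> small a B ->
  bmul A B p (p + a.+1)%N = A p p.+1 *m B p.+1 (p + a.+1)%N.
Proof.
move=> hA hB; rewrite /bmul (@sum_single _ _ _ p.+1); first by [].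
  lia.
move=> t ht; case: (ltnP t p.+1) => h; first by rewrite hA ?mul0mx //; lia.
by rewrite hB ?mulmx0 //; lia.
Qed.

Lemma mul_s1_r B A a p : small a B -> small 1 A ->
  bmul B A p (p + a.+1)%N = B p (p + a)%N *m A (p + a)%N (p + a.+1)%N.
Proof.
move=> hB hA; rewrite /bmul (@sum_single _ _ _ (p + a)%N); first by [].
  lia.
move=> t ht; case: (ltnP t (p + a)%N) => h; first by rewrite hB ?mul0mx //; lia.
by rewrite hA ?mulmx0 //; lia.
Qed.


Lemma x1_upper : upper x1. Proof. exact: mk_mat_upper. Qed.
Lemma x1_per : per x1. Proof. exact: mk_mat_per. Qed.
Lemma x1_diag r : x1 r r = 1%:M. Proof. exact: mk_mat_diag. Qed.

Definition E1 := strict x1.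
Definition F := bmul E1 E1.

Lemma x1_split : x1 = badd bone E1.
Proof. apply: strict_split; [exact: x1_upper | exact: x1_diag]. Qed.

Lemma F_upper : upper F. Proof. exact: bmul_upper. Qed.
Lemma F_per : per F. Proof. apply: bmul_per; apply: strict_per; exact: x1_per. Qed.
Lemma F_small : small 2 F. Proof. exact: (small_mul (strict_small _) (strict_small _)). Qed.

Lemma F_val2 p : F p (p + 2)%N = decode (sel (39,208,186)%N p).
Proof.
rewrite (per_red _ _ F_per) (sel_red _ p).
move: (@ltn_pmod p 3 isT); case: (p %% 3)%N => [|[|[|//]]] _;
rewrite /F /bmul /index_iota /= !big_cons big_nil /E1 /strict /x1 /mk_mat /=; mxc.
Qed.

Lemma F_val3 p : F p (p + 3)%N = 0.
Proof.
rewrite (per_red _ _ F_per).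
move: (@ltn_pmod p 3 isT); case: (p %% 3)%N => [|[|[|//]]] _;
rewrite /F /bmul /index_iota /= !big_cons big_nil /E1 /strict /x1 /mk_mat /=; mxc.
Qed.

Definition H : bmat := fun r s => if s == (r + 2)%N then F r s else 0.

Lemma H_hom : bhom 2 H.
Proof. by move=> r s /negbTE h; rewrite /H h. Qed.

Lemma F_agree4 : agree 4 F H.
Proof.
move=> r s hs; rewrite /H; case: eqP => // ne.
case: (ltnP s (r + 2)) => h; first exact: F_small.
have -> : s = (r + 3)%N by lia.
exact: F_val3.
Qed.

Lemma small_pow a X k : small a X -> small (a * k)%N (bpow X k).
Proof.
move=> h; elim: k => [|k IH]; first by rewrite muln0; exact: bone_small0.
by rewrite mulnS; apply: small_mul.
Qed.

Lemma Fpow_agree k : agree (2 * k + 2)%N (bpow F k) (bpow H k).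
Proof.
elim: k => [|k IH]; first exact: agree_refl.
rewrite /=.
apply: (@agree_trans _ _ (bmul F (bpow H k))).
  apply: (agree_le _ (agree_mul_r F_small IH)); lia.
apply: (agree_le _ (agree_mul_l F_agree4 (hom_small (@bpow_hom 2 H k H_hom)))); lia.
Qed.

Lemma pow2mod j : ((2 ^ j.+1) %% 3 = if odd j then 1 else 2)%N.
Proof.
elim: j => [|j IH] //.
rewrite expnS -modnMmr IH /=; by case: (odd j).
Qed.

Lemma sel_pow d p j : sel d (p + 2 ^ j.+1)%N = sel d (p + if odd j then 1 else 2)%N.
Proof. by rewrite (sel_red _ (p + _)) -modnDmr pow2mod -sel_red. Qed.

Lemma H_upper : upper H.
Proof. by move=> r s h; apply: H_hom; rewrite neq_ltn ltn_addr. Qed.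

Lemma hv j p : bpow H (2 ^ j)%N p (p + 2 ^ j.+1)%N =
  decode (sel (if odd j then (23,224,138) else (39,208,186))%N p).
Proof.
elim: j p => [|j IH] p.
  rewrite expn0 bpow1; last exact: H_upper.
  by rewrite expn1 /H eqxx F_val2.
have e1 : (2 ^ j.+1 = 2 ^ j + 2 ^ j)%N by rewrite expnS mul2n addnn.
have e2 : (p + 2 ^ j.+2 = p + 2 * 2 ^ j + 2 * 2 ^ j)%N by rewrite !expnS; lia.
rewrite e1 bpowD e2 (hom_mul_val p (@bpow_hom 2 H (2 ^ j) H_hom) (@bpow_hom 2 H (2 ^ j) H_hom)).
rewrite -expnS IH IH sel_pow /=.
by case: (odd j) => /=; [rewrite C3b | rewrite C3a].
Qed.


Definition good (X : bmat) (l : nat) (c1 c2 : diag3) :=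
  upper X /\ per X /\ (forall r, X r r = 1%:M) /\
      (forall p j, (0 < j <= l)%N -> X p (p + j)%N = 0) /\
      (forall p, X p (p + l.+1)%N = decode (sel c1 p)) /\
      (forall p, X p (p + l.+2)%N = decode (sel c2 p)).

Lemma good_form X l c1 c2 : good X l c1 c2 -> has_form X l c1 c2.
Proof.
case=> hu [hp [hd [hz [h1 h2]]]]; split; first exact: in_class_of.
split; first by move=> r j _; apply: hz.
by split=> r _.
Qed.

Lemma sel000 p : decode (sel (0,0,0)%N p) = 0.
Proof. by rewrite /sel; case: ifP => _; [|case: ifP => _]; rewrite decode0. Qed.

Lemma x1sq : bpow x1 2 = badd bone F.
Proof.
rewrite bpow2; last exact: x1_upper.
rewrite {1 2}x1_split sq_char2 //; exact: strict_upper.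
Qed.

Lemma x_odd k : good (bpow x1 (2 * k + 1)) 0 (23,224,138)%N
   (if odd k then (28,88,341) else (59,136,495))%N.
Proof.
set c := if odd k then F else bz.
have hcu : upper c by rewrite /c; case: (odd k); [exact: F_upper|].
have hcs : small 2 c by rewrite /c; case: (odd k); [exact: F_small|].
have eP : bpow x1 (2 * k + 1) = bmul x1 (bpow (badd bone F) k).
  rewrite addnC bpowD bpow1; last exact: x1_upper.
  by rewrite bpowM x1sq.
have hag : agree 4 (bpow x1 (2 * k + 1)) (badd x1 (badd c (bmul E1 c))).
  rewrite eP; apply: (agree_trans (agree_mul_r0 _ (pow_odd k F_upper F_small))).
  rewrite bmulDr bmulx1; last exact: x1_upper.
  rewrite {2}x1_split bmulDl bmul1 //; exact: agree_refl.
have hEc : small 3 (bmul E1 c) by exact: (small_mul (strict_small _) hcs).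
split; first exact: bpow_upper.
split; first by apply: bpow_per; exact: x1_per.
split; first by move=> r; apply: bpow_diag; exact: x1_diag.
split; first by move=> p j /andP[h1 h2]; move: h1; rewrite ltnNge h2.
split.
- move=> p; rewrite hag; last by lia.
  rewrite /badd (hcs p) ?(hEc p) ?addr0; try lia.
  by rewrite /x1 mk_mat_val.
- move=> p; rewrite hag; last by lia.
  rewrite /badd (hEc p) ?addr0; last by lia.
  rewrite /x1 mk_mat_val // /c; case: (odd k); last by rewrite addr0.
  by rewrite F_val2 C4.
Qed.

Lemma x_even j m : odd m -> good (bpow x1 (2 ^ j.+1 * m)) (2 ^ j.+1 - 1)
   (if odd j.+1 then (39,208,186) else (23,224,138))%N (0,0,0)%N.
Proof.
move=> hm.
set K := bpow F (2 ^ j).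
have hKu : upper K := bpow_upper F _.
have hKs : small (2 * 2 ^ j)%N K := @small_pow 2 F (2 ^ j) F_small.
have eP : bpow x1 (2 ^ j.+1 * m) = bpow (badd bone K) m.
  by rewrite bpowM expnS bpowM x1sq pow2_char2 //; exact: F_upper.
have e2 : (2 ^ j.+1 = 2 * 2 ^ j)%N := expnS 2 j.
have h2 : (2 <= 2 ^ j.+1)%N by have := expn_gt0 2 j; lia.
have hag : forall p i, (i <= 2 ^ j.+1 + 1)%N ->
    bpow x1 (2 ^ j.+1 * m) p (p + i)%N = bone p (p + i)%N + bpow H (2 ^ j) p (p + i)%N.
  move=> p i hi; rewrite eP (pow_odd m hKu hKs); last by lia.
  rewrite hm /badd /K (@Fpow_agree (2 ^ j)%N p (p + i)%N) //; lia.
have hH := @bpow_hom 2 H (2 ^ j) H_hom.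
have e1 : ((2 ^ j.+1 - 1).+1 = 2 ^ j.+1)%N by lia.
split; first exact: bpow_upper.
split; first by apply: bpow_per; exact: x1_per.
split; first by move=> r; apply: bpow_diag; exact: x1_diag.
split.
  move=> p i /andP[h1 h3]; rewrite hag; last by lia.
  rewrite hH; last by apply/eqP; lia.
  by rewrite addr0 /bone; case: eqP => // e; lia.
split.
  move=> p; rewrite e1 hag; last by lia.
  rewrite /bone; case: eqP => [e|_]; first by lia.
  by rewrite add0r hv /=; case: (odd j).
move=> p; rewrite e1 hag; last by lia.
rewrite hH; last by apply/eqP; lia.
by rewrite sel000 addr0 /bone; case: eqP => // e; lia.
Qed.


Lemma x2_upper : upper x2. Proof. exact: mk_mat_upper. Qed.
Lemma x2_per : per x2. Proof. exact: mk_mat_per. Qed.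
Lemma x2_diag r : x2 r r = 1%:M. Proof. exact: mk_mat_diag. Qed.

Definition M := bneg_strict x2.
Definition W := binv x2.

Lemma M_upper : upper M.
Proof. by move=> r s h; rewrite /M /bneg_strict bone_upper // x2_upper // subr0. Qed.

Lemma M_small : small 1 M.
Proof.
move=> r s; rewrite addn1 ltnS leq_eqVlt => /orP[/eqP ->|h]; last exact: M_upper.
by rewrite /M /bneg_strict /bone eqxx x2_diag subrr.
Qed.

Lemma M_per : per M.
Proof. by move=> r s; rewrite /M /bneg_strict bone_per x2_per. Qed.

Lemma Mpow_small k : small k (bpow M k).
Proof. by have := @small_pow 1 M k M_small; rewrite mul1n. Qed.

Lemma W_ext K r s : (s - r < K)%N -> W r s = \sum_(k < K) bpow M k r s.
Proof.
move=> hK; rewrite /W /binv -/M.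
rewrite (big_ord_widen K (fun k => bpow M k r s)); last by lia.
rewrite big_mkcond /=; apply: eq_bigr => k _; case: ifP => // /negbT h.
by rewrite Mpow_small //; lia.
Qed.

Lemma bmul_suml (Xs : nat -> bmat) K X Y r s :
  (forall t, (r <= t <= s)%N -> X r t = \sum_(k < K) Xs k r t) ->
  bmul X Y r s = \sum_(k < K) bmul (Xs k) Y r s.
Proof.
move=> h; rewrite /bmul.
rewrite (eq_big_nat _ _ (F2 := fun t => \sum_(k < K) Xs k r t *m Y t s)).
  by rewrite exchange_big.
by move=> t ht; rewrite h ?mulmx_suml //; lia.
Qed.

Lemma bmul_sumr (Ys : nat -> bmat) K X Y r s :
  (forall t, (r <= t <= s)%N -> Y t s = \sum_(k < K) Ys k t s) ->
  bmul X Y r s = \sum_(k < K) bmul X (Ys k) r s.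
Proof.
move=> h; rewrite /bmul.
rewrite (eq_big_nat _ _ (F2 := fun t => \sum_(k < K) X r t *m Ys k t s)).
  by rewrite exchange_big.
by move=> t ht; rewrite h ?mulmx_sumr //; lia.
Qed.

Lemma telesc (f : nat -> blk) K : \sum_(k < K) (f k - f k.+1) = f 0%N - f K.
Proof.
elim: K => [|K IH]; first by rewrite big_ord0 subrr.
by rewrite big_ord_recr /= IH addrA subrK.
Qed.

Lemma x2_eq t s : x2 t s = bone t s - M t s.
Proof. by rewrite /M /bneg_strict opprB addrC subrK. Qed.

Lemma bmul_x2_r X r s : upper X -> bmul X x2 r s = X r s - bmul X M r s.
Proof.
move=> hX; have {1}-> : X r s = bmul X bone r s by rewrite bmulx1.
by rewrite /bmul -sumrB; apply: eq_bigr => t _; rewrite x2_eq mulmxBr.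
Qed.

Lemma bmul_x2_l X r s : upper X -> bmul x2 X r s = X r s - bmul M X r s.
Proof.
move=> hX; have {1}-> : X r s = bmul bone X r s by rewrite bmul1.
by rewrite /bmul -sumrB; apply: eq_bigr => t _; rewrite x2_eq mulmxBl.
Qed.

Lemma Mpow_r k : bmul (bpow M k) M = bpow M k.+1.
Proof. by rewrite -addn1 bpowD bpow1 //; exact: M_upper. Qed.

Lemma W_left : bmul W x2 = bone.
Proof.
apply: beq => r s.
rewrite (@bmul_suml (bpow M) (s - r).+1); last by move=> t ht; apply: W_ext; lia.
under eq_bigr => k _ do rewrite (@bmul_x2_r (bpow M k) r s (bpow_upper M k)) Mpow_r.
by rewrite (telesc (fun k => bpow M k r s)) (@Mpow_small (s - r).+1 r s) ?subr0 //; lia.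
Qed.

Lemma W_right : bmul x2 W = bone.
Proof.
apply: beq => r s.
rewrite (@bmul_sumr (bpow M) (s - r).+1); last by move=> t ht; apply: W_ext; lia.
under eq_bigr => k _ do rewrite (@bmul_x2_l (bpow M k) r s (bpow_upper M k)) -[bmul M (bpow M k)]/(bpow M k.+1).
by rewrite (telesc (fun k => bpow M k r s)) (@Mpow_small (s - r).+1 r s) ?subr0 //; lia.
Qed.


Lemma W_upper : upper W.
Proof. move=> r s h; rewrite (@W_ext 1); last by lia. by rewrite big_ord1 /= bone_upper. Qed.

Lemma W_diag r : W r r = 1%:M.
Proof. rewrite (@W_ext 1); last by lia. by rewrite big_ord1 /= /bone eqxx. Qed.

Lemma W_per : per W.
Proof.
move=> r s; rewrite /W /binv subnDr; apply: eq_bigr => k _.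
by rewrite (bpow_per k M_per).
Qed.

Lemma W_val1 q : W q (q + 1)%N = x2 q (q + 1)%N.
Proof.
rewrite (@W_ext 2); last by lia.
rewrite !big_ord_recr big_ord0 /= add0r bmulx1; last exact: M_upper.
have e : (q == (q + 1)%N) = false by apply/negbTE; lia.
by rewrite /bone /M /bneg_strict /bone e sub0r add0r blkN.
Qed.

Lemma y_conj n : bpow y1 n = bmul (bmul x2 (bpow x1 n)) W.
Proof.
elim: n => [|n IH].
  by rewrite /= bmulx1 ?W_right //; exact: x2_upper.
rewrite [bpow y1 n.+1]/= IH /y1 -/W !bmulA -(bmulA (bmul x2 x1) W x2) W_left bmulx1 //.
exact: bmul_upper.
Qed.

Lemma y_good n l c1 c2 : good (bpow x1 n) l c1 c2 ->
  upper (bpow y1 n) /\ per (bpow y1 n) /\ (forall r, bpow y1 n r r = 1%:M) /\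
  (forall p j, (0 < j <= l)%N -> bpow y1 n p (p + j)%N = 0) /\
  (forall p, bpow y1 n p (p + l.+1)%N = decode (sel c1 p)) /\
  (forall p, bpow y1 n p (p + l.+2)%N = decode (sel c2 p) +
      decode (sel (46,68,217)%N p) *m decode (sel c1 (p + 1)%N) +
      decode (sel c1 p) *m decode (sel (46,68,217)%N (p + l.+1)%N)).
Proof.
case=> hu [hp [hd [hz [h1 h2]]]].
set P := bpow x1 n in hu hp hd hz h1 h2 *.
set K := strict P.
have eP : P = badd bone K by exact: strict_split.
have hKu : upper K := strict_upper P.
have hKs : small l.+1 K.
  move=> r s hs; rewrite /K /strict; case: leqP => // h.
  have -> : s = (r + (s - r))%N by lia.
  by rewrite hz //; lia.
set E2 := strict x2.
set W' := strict W.
have ex2 : x2 = badd bone E2 by apply: strict_split; [exact: x2_upper | exact: x2_diag].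
have eW : W = badd bone W' by apply: strict_split; [exact: W_upper | exact: W_diag].
have hEKu : upper (bmul E2 K) := bmul_upper _ _.
have eY : bpow y1 n = badd bone (badd (badd K (bmul E2 K)) (badd (bmul K W') (bmul (bmul E2 K) W'))).
  rewrite y_conj -/P {1}eP bmulDr bmulx1; last exact: x2_upper.
  rewrite bmulDl W_right {1}ex2 bmulDl bmul1 // {1}eW bmulDr bmulx1; last exact: badd_upper.
  by rewrite bmulDl.
have hEK : small (1 + l.+1) (bmul E2 K) := small_mul (strict_small _) hKs.
have hKW : small (l.+1 + 1) (bmul K W') := small_mul hKs (strict_small _).
have hEKW : small (1 + l.+1 + 1) (bmul (bmul E2 K) W') := small_mul hEK (strict_small _).
split; first exact: bpow_upper.
split.
  rewrite y_conj; apply: bmul_per; last exact: W_per.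
  apply: bmul_per; [exact: x2_per | exact: bpow_per x1_per].
split.
  by move=> r; rewrite y_conj -/P !bmul_diag x2_diag hd W_diag !mul1mx.
split.
  move=> p j hj; rewrite eY /badd hKs ?hEK ?hKW ?hEKW; try lia.
  by rewrite !addr0 /bone; case: eqP => // e; lia.
split.
  move=> p; rewrite eY /badd (hEK p) ?(hKW p) ?(hEKW p); try lia.
  rewrite /K strict_val // h1 /bone !addr0; case: eqP => [e|_]; [lia | by rewrite add0r].
move=> p; rewrite eY /badd (hEKW p); last by lia.
rewrite /bone ifF; last by apply/negbTE; lia.
rewrite add0r addr0.
rewrite (mul_s1_l _ (strict_small x2) hKs) (mul_s1_r _ hKs (strict_small W)).
have e1 : (p + l.+2 = p.+1 + l.+1)%N by lia.
have e2 : (p + l.+2 = (p + l.+1) + 1)%N by lia.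
have f1 : K p (p + l.+2)%N = decode (sel c2 p) by rewrite /K strict_val // h2.
have f2 : strict x2 p p.+1 = decode (sel (46,68,217)%N p) by rewrite -(addn1 p) strict_val // /x2 mk_mat_val.
have f3 : K p.+1 (p + l.+2)%N = decode (sel c1 (p+1)) by rewrite e1 /K strict_val // h1 addn1.
have f4 : K p (p + l.+1)%N = decode (sel c1 p) by rewrite /K strict_val // h1.
have f5 : strict W (p + l.+1)%N (p + l.+2)%N = decode (sel (46,68,217)%N (p + l.+1)).
  by rewrite e2 strict_val // W_val1 /x2 mk_mat_val.
by rewrite f1 f2 f3 f4 f5.
Qed.


Lemma ndec n : (0 < n)%N ->
  (exists k, n = 2 * k + 1)%N \/ (exists j m, odd m /\ n = 2 ^ j.+1 * m)%N.
Proof.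
elim/ltn_ind: n => n IH hn.
have e := odd_double_half n.
case ho: (odd n); first by left; exists n./2; rewrite ho /= in e; lia.
rewrite ho /= in e.
have h1 : (0 < n./2)%N by lia.
have h2 : (n./2 < n)%N by lia.
right; case: (IH _ h2 h1) => [[k ek]|[j [m [hm em]]]].
  exists 0%N, (2 * k + 1)%N; split; first by rewrite oddD oddM.
  by rewrite expn1; lia.
exists j.+1, m; split => //; rewrite expnS; lia.
Qed.

Lemma y_to_good n l c1 c2 c2' : good (bpow x1 n) l c1 c2 ->
  (forall p, decode (sel c2 p) +
      decode (sel (46,68,217)%N p) *m decode (sel c1 (p + 1)%N) +
      decode (sel c1 p) *m decode (sel (46,68,217)%N (p + l.+1)%N) = decode (sel c2' p)) ->
  good (bpow y1 n) l c1 c2'.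
Proof.
move=> /y_good [hu [hp [hd [hz [h1 h2]]]]] hc.
do 5 (split => //).
by move=> p; rewrite h2 hc.
Qed.

Local Close Scope ring_scope.

Theorem proposition4p6 :
  (forall n : nat, (1 <= n)%N ->
     has_form (bpow x1 n) 0 (23, 224, 138)%N (59, 136, 495)%N \/
     has_form (bpow x1 n) 0 (23, 224, 138)%N (28, 88, 341)%N \/
     (exists r : nat, (1 <= r)%N /\ odd r /\
        has_form (bpow x1 n) (2 ^ r - 1) (39, 208, 186)%N (0, 0, 0)%N) \/
     (exists r : nat, (2 <= r)%N /\ ~~ odd r /\
        has_form (bpow x1 n) (2 ^ r - 1) (23, 224, 138)%N (0, 0, 0)%N)) /\
  (forall n : nat, (1 <= n)%N ->
     has_form (bpow y1 n) 0 (23, 224, 138)%N (33, 146, 501)%N \/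
     has_form (bpow y1 n) 0 (23, 224, 138)%N (6, 66, 335)%N \/
     (exists r : nat, (1 <= r)%N /\ odd r /\
        has_form (bpow y1 n) (2 ^ r - 1) (39, 208, 186)%N (0, 106, 247)%N) \/
     (exists r : nat, (2 <= r)%N /\ ~~ odd r /\
        has_form (bpow y1 n) (2 ^ r - 1) (23, 224, 138)%N (26, 26, 26)%N)).
Proof.
split=> n hn; case: (ndec hn) => [[k ->]|[j [m [hm ->]]]].
- have := x_odd k; case: (odd k) => h; [right; left | left]; exact: good_form.
- have h := x_even j hm; right; right.
  case ho: (odd j.+1) in h *.
    by left; exists j.+1; do 2 (split => //); exact: good_form.
  right; exists j.+1; split; first by destruct j; [discriminate ho | done].
  by rewrite ho; split => //; exact: good_form.
- have := x_odd k; case: (odd k) => h; [right; left | left]; apply: good_form;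
    apply: (y_to_good h) => p; [exact: C5b | exact: C5a].
- have h := x_even j hm; right; right.
  have el : ((2 ^ j.+1 - 1).+1 = 2 ^ j.+1)%N by have := expn_gt0 2 j.+1; lia.
  case ho: (odd j.+1) in h *.
    left; exists j.+1; do 2 (split => //); apply: good_form.
    apply: (y_to_good h) => p; rewrite el sel_pow.
    by move: ho => /= /negbTE ->; exact: C6a.
  right; exists j.+1; split; first by destruct j; [discriminate ho | done].
  split; first by rewrite ho.
  apply: good_form; apply: (y_to_good h) => p; rewrite el sel_pow.
  by move: ho => /= /negbFE ->; exact: C6b.
Qed.
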